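(* Fix $X\in\mathcal{E}$ and let $I$ be the Daniell integral associated with $X$. Let $f\in\mathbb{L}$ have bounded support. Then there exists an open dense set $H\subseteq K$ such that $I(f)(\omega)=f(X(\omega))$ for every $\omega\in H$.
   Context: Let $\mathcal{E}$ be an order complete vector lattice with a weak order unit $E$, $K$ its Stone space (extremally disconnected compact Hausdorff), and $C^\infty(K)$ the vector lattice of continuous functions $K\to[-\infty,\infty]$ finite off a nowhere dense set (identified when equal off a nowhere dense set), which is the universal completion $\mathcal{E}^u$. Fix a Maeda–Ogasawara representation of $\mathcal{E}$ as an order dense ideal of $C^\infty(K)$ with $E$ corresponding to $\mathbf{1}$. For $Y\in\mathcal{E}$, $P_Y$ denotes the band projection onto the band generated by $Y$; in this representation $P_YE=\mathbf{1}_{\overline{\{Y\neq0\}}}$. Daniell calculus: $F(\mathbb{R})$ is the algebra of finite disjoint unions of intervals $(a,b]$, $(a,\infty)$, $(-\infty,b]$ ($a,b\in\mathbb{R}$), and $\mathbb{L}$ is the vector lattice of functions $f=\sum_{i=1}^n a_i\mathbf{1}_{S_i}$ with $a_i\in\mathbb{R}$ and $(S_i)$ a partition of $\mathbb{R}$ into sets of $F(\mathbb{R})$. For fixed $X\in\mathcal{E}$ the spectral system is $A_t=E-P_{(X-tE)^+}E$ ($t\in\mathbb{R}$), with $A_\infty=\sup_tA_t$, $A_{-\infty}=\inf_tA_t$; the measure $\mu_A$ is $\mu_A(a,b]=A_b-A_a$, $\mu_A(a,\infty)=A_\infty-A_a$, $\mu_A(-\infty,b]=A_b-A_{-\infty}$,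 extended additively to finite disjoint unions; and the Daniell integral associated with $X$ is $I(f)=\sum_i a_i\mu_A(S_i)$ for $f=\sum_ia_i\mathbf{1}_{S_i}\in\mathbb{L}$. *)

(* Defs.v *)
From HB Require Import structures.
From mathcomp Require Import all_boot all_order all_algebra.
From mathcomp Require Import all_classical all_reals all_analysis.
Import numFieldNormedType.Exports.
Set Implicit Arguments. Unset Strict Implicit. Unset Printing Implicit Defensive.
Import Order.TTheory GRing.Theory Num.Theory.
Local Open Scope classical_set_scope.
Local Open Scope ring_scope.

Definition nowhere_dense (T : topologicalType) (N : set T) : Prop :=
  interior (closure N) = set0.

Definition extremally_disconnected (T : topologicalType) : Prop :=
  forall U : set T, open U -> open (closure U).

(* X is an element of C^oo(K): continuous K -> [-oo,+oo], finite off a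
   nowhere dense set.  (Two such continuous functions that agree off a
   nowhere dense set agree everywhere, so no quotient is needed.) *)
Definition in_Cinf (R : realType) (K : topologicalType) (X : K -> \bar R) : Prop :=
  continuous X /\ nowhere_dense [set w | ~ (X w \is a fin_num)].

(* P_Y E = 1_{closure {Y <> 0}} in the Maeda--Ogasawara representation *)
Definition bandprojE (R : realType) (K : topologicalType) (Y : K -> \bar R) : K -> R :=
  \1_(closure [set w | Y w != 0%E]).

Definition posdiff (R : realType) (K : topologicalType) (X : K -> \bar R) (t : R)
  : K -> \bar R := fun w => maxe (X w - t%:E)%E 0%E.

(* A_t = E - P_{(X - tE)^+} E  (E corresponds to the constant function 1) *)
Definition spectral (R : realType) (K : topologicalType) (X : K -> \bar R) (t : R)
  : K -> R := fun w => 1 - bandprojE (posdiff X t) w.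

Definition is_sup_fam (R : realType) (K : topologicalType) (A : R -> K -> R)
  (s : K -> R) : Prop :=
  continuous s /\ (forall t w, A t w <= s w) /\
  (forall g : K -> R, continuous g -> (forall t w, A t w <= g w) ->
     forall w, s w <= g w).

Definition is_inf_fam (R : realType) (K : topologicalType) (A : R -> K -> R)
  (s : K -> R) : Prop :=
  continuous s /\ (forall t w, s w <= A t w) /\
  (forall g : K -> R, continuous g -> (forall t w, g w <= A t w) ->
     forall w, g w <= s w).

Inductive ivl (R : realType) : Type :=
  | IOC of R & R
  | IOinf of R
  | IinfC of R.

Definition ivl_set (R : realType) (J : ivl R) : set R :=
  match J with
  | IOC a b => [set x | a < x <= b]
  | IOinf a => [set x | a < x]
  | IinfC b => [set x | x <= b]
  end.

Definition ivl_wf (R : realType) (J : ivl R) : Prop :=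
  match J with IOC a b => a < b | _ => True end.

(* a set of F(R), given as a finite list of pairwise disjoint basic intervals *)
Definition FR_wf (R : realType) (s : seq (ivl R)) : Prop :=
  (forall i, (i < size s)%N -> ivl_wf (nth (IinfC 0) s i)) /\
  (forall i j, (i < size s)%N -> (j < size s)%N -> i != j ->
     ivl_set (nth (IinfC 0) s i) `&` ivl_set (nth (IinfC 0) s j) = set0).

Definition FR_set (R : realType) (s : seq (ivl R)) : set R :=
  \bigcup_(i in [set i | (i < size s)%N]) ivl_set (nth (IinfC 0) s i).

Definition mu_ivl (R : realType) (K : Type) (A : R -> K -> R) (Ainf Aminf : K -> R)
  (J : ivl R) : K -> R :=
  match J with
  | IOC a b => fun w => A b w - A a w
  | IOinf a => fun w => Ainf w - A a w
  | IinfC b => fun w => A b w - Aminf w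
  end.

Definition mu_FR (R : realType) (K : Type) (A : R -> K -> R) (Ainf Aminf : K -> R)
  (s : seq (ivl R)) : K -> R :=
  fun w => \sum_(J <- s) mu_ivl A Ainf Aminf J w.

(* an element f = sum_i a_i 1_{S_i} of L, (S_i) a partition of R in F(R) *)
Definition L_wf (R : realType) (n : nat) (S : 'I_n -> seq (ivl R)) : Prop :=
  (forall i, FR_wf (S i)) /\
  (forall x : R, exists i, FR_set (S i) x) /\
  (forall i j, i != j -> FR_set (S i) `&` FR_set (S j) = set0).

Definition L_fun (R : realType) (n : nat) (a : 'I_n -> R) (S : 'I_n -> seq (ivl R))
  : R -> R := fun x => \sum_(i < n) a i * \1_(FR_set (S i)) x.

Definition daniell (R : realType) (K : Type) (A : R -> K -> R) (Ainf Aminf : K -> R)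
  (n : nat) (a : 'I_n -> R) (S : 'I_n -> seq (ivl R)) : K -> R :=
  fun w => \sum_(i < n) a i * mu_FR A Ainf Aminf (S i) w.

Definition bounded_support (R : realType) (f : R -> R) : Prop :=
  exists M : R, forall x, M < `|x| -> f x = 0.

(* Main.v *)
Require Import Defs.
From HB Require Import structures.
From mathcomp Require Import all_boot all_order all_algebra.
From mathcomp Require Import all_classical all_reals all_analysis.
From mathcomp Require Import lra.
Import Order.TTheory GRing.Theory Num.Theory.
Import numFieldNormedType.Exports.
Local Open Scope classical_set_scope.
Local Open Scope ring_scope.

Definition Gset {K : topologicalType} (A : set K) : set K := ~` closure A `|` A.

Lemma Gset_open (K : topologicalType) (A : set K) : open A -> open (Gset A).
Proof. move=> oA; apply: openU => //; rewrite openC; exact: closed_closure. Qed.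

Lemma Gset_dense (K : topologicalType) (A : set K) : dense (Gset A).
Proof.
move=> O [p Op] oO.
case: (pselect (O `&` A !=set0)) => [[q [Oq Aq]]|nOA].
  by exists q; split => //; right.
exists p; split => //; left => cl; apply: nOA.
have [q [Aq Oq]] := cl O (open_nbhs_nbhs (conj oO Op)).
by exists q.
Qed.

Lemma maxe_ne0 (R : realType) (y : \bar R) (t : R) :
  (maxe (y - t%:E) 0 != 0)%E = (t%:E < y)%E.
Proof.
rewrite maxEle; case: y => [r| |] /=.
- rewrite lte_fin -EFinD lee_fin subr_le0; case: (leP r t) => h.
  + by rewrite eqxx.
  + by rewrite eqe subr_eq0 gt_eqF.
- by rewrite ltry.
- by rewrite addNye leNye eqxx ltNge leNye.
Qed.

Lemma spectral_val (R : realType) (K : topologicalType) (X : K -> \bar R) (t : R) w :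
  X w \is a fin_num -> Gset [set w | (t%:E < X w)%E] w ->
  spectral X t w = ((fine (X w) <= t)%R : bool)%:R.
Proof.
move=> fw G.
rewrite /spectral /bandprojE /posdiff.
have -> : [set w | maxe (X w - t%:E)%E 0%E != 0%E] = [set w | (t%:E < X w)%E].
  by apply/seteqP; split => v /=; rewrite maxe_ne0.
rewrite indicE.
have xE : X w = (fine (X w))%:E by rewrite fineK.
case: G => [nc|gt].
  have -> : (w \in closure [set w | (t%:E < X w)%E]) = false.
    by apply/negbTE/negP => /set_mem.
  have : ~ (t%:E < X w)%E by move=> h; apply: nc; apply: subset_closure.
  by rewrite xE lte_fin => /negP; rewrite -leNgt => ->; rewrite subr0.
have -> : (w \in closure [set w | (t%:E < X w)%E]) = true.
  by apply/mem_set; apply: subset_closure.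
by move: gt => /=; rewrite {1}xE lte_fin => gt; rewrite leNgt gt subrr.
Qed.

Lemma Hfin_open_dense {R : realType} {K : topologicalType} (X : K -> \bar R) :
  in_Cinf X -> open [set w | X w \is a fin_num] /\ dense [set w | X w \is a fin_num].
Proof.
move=> [cX nd]; split.
  have -> : [set w | X w \is a fin_num] =
      X @^-1` ([set y | (-oo < y)%E] `&` [set y | (y < +oo)%E]).
    by apply/seteqP; split => v /=; rewrite fin_numElt => /andP.
  move/continuousP : cX; apply; apply: openI.
    exact: open_ereal_gt_ereal.
  exact: open_ereal_lt_ereal.
move=> O [p Op] oO.
apply/set0P/negP => /eqP O0.
have sub : O `<=` closure [set w | ~ (X w \is a fin_num)].
  move=> q Oq; apply: subset_closure => /= fq.
  by have : (O `&` [set w | X w \is a fin_num]) q by []; rewrite O0.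
rewrite (open_subsetE _ oO) in sub.
by have := sub p Op; rewrite /nowhere_dense in nd; rewrite nd.
Qed.

Definition Hs {R : realType} {K : topologicalType} (X : K -> \bar R) (l : seq R) : set K :=
  foldr (fun t H => Gset [set w | (t%:E < X w)%E] `&` H) [set w | X w \is a fin_num] l.

Lemma Hs_open_dense (R : realType) (K : topologicalType) (X : K -> \bar R) (l : seq R) :
  in_Cinf X -> open (Hs X l) /\ dense (Hs X l).
Proof.
move=> hX; case: (Hfin_open_dense X hX) => o0 d0.
elim: l => [|t l [oH dH]] //=.
have oG : open (Gset [set w | (t%:E < X w)%E]).
  apply: Gset_open.
  exact: ((continuousP X).1 hX.1 _ (open_ereal_gt_ereal (x:=t%:E))).
split; first exact: openI.
by apply: denseI => //; exact: Gset_dense.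
Qed.

Lemma Hs_mem (R : realType) (K : topologicalType) (X : K -> \bar R) (l : seq R) w :
  Hs X l w -> X w \is a fin_num /\ forall t, t \in l -> Gset [set w | (t%:E < X w)%E] w.
Proof.
elim: l => [|t l IH] /=; first by [].
move=> [G /IH [f H]]; split => // u; rewrite inE => /orP [/eqP -> //|]; exact: H.
Qed.

Definition endpts {R : realType} (J : ivl R) : seq R :=
  match J with IOC a b => [:: a; b] | IOinf a => [:: a] | IinfC b => [:: b] end.

Definition bps {R : realType} {n : nat} (S : 'I_n -> seq (ivl R)) : seq R :=
  flatten [seq flatten [seq endpts J | J <- S i] | i <- enum 'I_n].

Lemma bps_mem (R : realType) (n : nat) (S : 'I_n -> seq (ivl R)) i k t :
  (k < size (S i))%N -> t \in endpts (nth (IinfC 0) (S i) k) -> t \in bps S.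
Proof.
move=> ks tJ; apply/flattenP; exists (flatten [seq endpts J | J <- S i]).
  by apply: map_f; rewrite mem_enum.
apply/flattenP; exists (nth [::] [seq endpts J | J <- S i] k).
  by apply: mem_nth; rewrite size_map.
by rewrite (nth_map (IinfC 0)).
Qed.

Lemma ioc_val (R : realType) (K : topologicalType) (X : K -> \bar R)
  (Ainf Aminf : K -> R) (u v : R) w :
  u < v -> X w \is a fin_num ->
  Gset [set w | (u%:E < X w)%E] w -> Gset [set w | (v%:E < X w)%E] w ->
  mu_ivl (spectral X) Ainf Aminf (IOC u v) w = \1_(ivl_set (IOC u v)) (fine (X w)).
Proof.
move=> uv fw Gu Gv /=; rewrite !spectral_val // indicE.
set x := fine (X w).
have -> : (x \in [set x | u < x <= v]) = (u < x <= v).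
  by apply/idP/idP => [/set_mem //|h]; apply/mem_set.
case: (leP x u) => h1.
  by rewrite (le_trans h1 (ltW uv)) subrr.
by rewrite subr0.
Qed.

Lemma sum_ind (R : realType) (s : seq (ivl R)) (F : ivl R -> R) (x : R) :
  FR_wf s -> (forall k, (k < size s)%N ->
     F (nth (IinfC 0) s k) = \1_(ivl_set (nth (IinfC 0) s k)) x) ->
  \sum_(J <- s) F J = \1_(FR_set s) x.
Proof.
move=> [_ dis] hF.
rewrite (big_nth (IinfC 0)) big_mkord.
have nth_in : forall k : 'I_(size s), F (nth (IinfC 0) s k) = \1_(ivl_set (nth (IinfC 0) s k)) x.
  by move=> k; apply: hF.
under eq_bigr => k _ do rewrite nth_in.
case: (pselect (FR_set s x)) => [[k /= ks xk]|nx].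
  rewrite (bigD1 (Ordinal ks)) //= big1 => [|j jk].
    rewrite addr0 !indicE (mem_set xk) mem_set //; by exists k.
  rewrite indicE; apply/eqP; rewrite pnatr_eq0 eqb0; apply/negP => /set_mem xj.
  have : (ivl_set (nth (IinfC 0) s k) `&` ivl_set (nth (IinfC 0) s j)) x by [].
  rewrite dis //; last by rewrite eq_sym; apply: contra jk => /eqP jk; apply/eqP/val_inj.
rewrite big1 => [|j _]; first by rewrite indicE memNset.
rewrite indicE memNset //= => xj; apply: nx; rewrite /FR_set; exists (nat_of_ord j) => //=.
Qed.

Lemma L_fun_at (R : realType) (n : nat) (a : 'I_n -> R) (S : 'I_n -> seq (ivl R)) i x :
  L_wf S -> FR_set (S i) x -> L_fun a S x = a i.
Proof.
move=> [_ [_ dis]] xi; rewrite /L_fun (bigD1 i) //= big1 => [|j ji].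
  by rewrite indicE mem_set // mulr1 addr0.
rewrite indicE memNset ?mulr0 // => xj.
have : (FR_set (S i) `&` FR_set (S j)) x by [].
by rewrite dis // eq_sym.
Qed.

Lemma coef_zero (R : realType) (n : nat) (a : 'I_n -> R) (S : 'I_n -> seq (ivl R)) :
  L_wf S -> bounded_support (L_fun a S) ->
  forall i, a i != 0 -> forall k, (k < size (S i))%N ->
    exists u v, nth (IinfC 0) (S i) k = IOC u v.
Proof.
move=> hL [M hM] i ai k ks.
have inS : forall y, ivl_set (nth (IinfC 0) (S i) k) y -> FR_set (S i) y.
  by move=> y yJ; exists k.
case: (nth (IinfC 0) (S i) k) inS => [u v|c|c] inS; first by exists u, v.
- pose y := Num.max c `|M| + 1.
  have hy1 : c < y by rewrite /y ltr_pwDr // le_max lexx.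
  have hy2 : M < `|y|.
    rewrite /y ger0_norm; last by apply: addr_ge0 => //; rewrite le_max normr_ge0 orbT.
    by apply: (le_lt_trans (ler_norm M)); rewrite ltr_pwDr // le_max lexx orbT.
  have := hM _ hy2; rewrite (L_fun_at _ _ a S i _ hL (inS _ hy1)) => a0.
  by move: ai; rewrite a0 eqxx.
- pose m := Num.min c (- `|M|).
  have m1 : m <= c by rewrite /m ge_min lexx.
  have m2 : m <= - `|M| by rewrite /m ge_min lexx orbT.
  have nM : M <= `|M| by apply: ler_norm.
  have n0 : 0 <= `|M| by apply: normr_ge0.
  pose y := m - 1.
  have hy1 : y <= c by rewrite /y; lra.
  have hy2 : M < `|y|.
    rewrite /y ler0_norm; last by lra.
    lra.
  have := hM _ hy2; rewrite (L_fun_at _ _ a S i _ hL (inS _ hy1)) => a0.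
  by move: ai; rewrite a0 eqxx.
Qed.

Theorem mainTheorem4 (R : realType) (K : topologicalType)
  (hK_compact : compact [set: K]) (hK_hausdorff : hausdorff_space K)
  (hK_ed : extremally_disconnected K)
  (X : K -> \bar R) (hX : in_Cinf X)
  (Ainf Aminf : K -> R)
  (hAinf : is_sup_fam (spectral X) Ainf)
  (hAminf : is_inf_fam (spectral X) Aminf)
  (n : nat) (a : 'I_n -> R) (S : 'I_n -> seq (ivl R))
  (hf : L_wf S) (hfb : bounded_support (L_fun a S)) :
  exists H : set K, open H /\ dense H /\
    forall w, H w ->
      X w \is a fin_num /\
      daniell (spectral X) Ainf Aminf a S w = L_fun a S (fine (X w)).
Proof.
exists (Hs X (bps S)).
have [oH dH] := Hs_open_dense _ _ X (bps S) hX.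
split => //; split => // w /Hs_mem [fw G]; split => //.
rewrite /daniell /L_fun; apply: eq_bigr => i _.
case: (eqVneq (a i) 0) => [->|ai]; first by rewrite !mul0r.
congr (_ * _); rewrite /mu_FR.
apply: sum_ind; first exact: hf.1.
move=> k ks.
have [u [v E]] := coef_zero _ _ a S hf hfb i ai k ks.
have uv : u < v by have := (hf.1 i).1 k ks; rewrite E.
rewrite E; apply: ioc_val => //; apply: G; apply: (bps_mem _ _ S i k) => //;
  by rewrite E inE ?eqxx // orbC inE eqxx.
Qed.
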